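(* Let $k\in\mathbb N$, $t\in(0,1)$ and $n\le 2k+2$. Then $A_{n,k,t}^{-1}$ is checkerboard: for all $i,j$, the $(i,j)$ entry of $A_{n,k,t}^{-1}$ is either $0$ or has sign $(-1)^{i-j}$. Equivalently, all minors of $A_{n,k,t}$ of order $n-1$ are nonnegative.
   Context: For $x\in\mathbb R$, $x_+=\max\{x,0\}$. For $k\in\mathbb{N}$ and $t\in(0,1)$, $A_{\infty,k,t}=(A(i,j))_{i,j\ge1}$ is the infinite Toeplitz Hessenberg matrix with $A(i,j)=a_{j-i}$ for $j\ge i$, $A(i+1,i)=1$, and $A(i,j)=0$ for $i\ge j+2$, where $(a_0,a_1,\ldots)$ is the unique sequence for which the leading principal minors satisfy $\det A(\{1,\dots,n\})=t^{(n-k-1)_+}$ for all $n\in\mathbb N$. $A_{n,k,t}$ is the leading principal $n\times n$ submatrix of $A_{\infty,k,t}$ (it is invertible since its determinant is $t^{(n-k-1)_+}>0$). *)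

(* Defs.v *)
From mathcomp Require Import all_boot all_order all_algebra.
Set Implicit Arguments. Unset Strict Implicit. Unset Printing Implicit Defensive.
Import Order.TTheory GRing.Theory Num.Theory.
Local Open Scope ring_scope.

(* Leading principal n x n submatrix of the infinite Toeplitz Hessenberg
   matrix A_infty with entries A(i,j) = a_(j-i) for j >= i, A(i+1,i) = 1,
   and 0 below the subdiagonal.  Indices are 0-based here (i j : 'I_n). *)
Definition toeplitz_hess {R : pzRingType} (a : nat -> R) (n : nat) : 'M[R]_n :=
  \matrix_(i < n, j < n)
    if (i <= j)%N then a (j - i)%N
    else if i == j.+1 :> nat then 1 else 0.

(* The defining property of the sequence (a_0, a_1, ...) of A_{infty,k,t}:
   det A({1..n}) = t^((n-k-1)_+) for every n >= 1.  Here (n - k.+1)%N is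
   truncated subtraction, i.e. (n-k-1)_+. *)
Definition is_Akt_seq {R : comPzRingType} (k : nat) (t : R) (a : nat -> R) : Prop :=
  forall n : nat, (0 < n)%N -> \det (toeplitz_hess a n) = t ^+ (n - k.+1)%N.

(* Main.v *)
Require Import Defs.
From mathcomp Require Import all_boot all_order all_algebra.
From mathcomp Require Import zify ring lra.
Import Order.TTheory GRing.Theory Num.Theory.
Local Open Scope ring_scope.

Definition Hm {R : pzRingType} (a : nat -> R) (s m : nat) : 'M[R]_m :=
  \matrix_(i < m, j < m) if i == 0%N :> nat then a (s + j)%N
     else if (i <= j)%N then a (j - i)%N else if i == j.+1 :> nat then 1 else 0.

Lemma Hm0 (R : pzRingType) (a : nat -> R) m : Hm a 0 m = toeplitz_hess a m.
Proof.
apply/matrixP => i j; rewrite !mxE.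
by case: eqP => // ->; rewrite subn0 add0n.
Qed.

Lemma Hm_row0 (R : pzRingType) (a : nat -> R) s m :
  row' ord0 (col' ord0 (Hm a s m.+2)) = toeplitz_hess a m.+1.
Proof.
apply/matrixP => i j; rewrite !mxE /=.
rewrite /bump /= !add1n ltnS subSS eqSS.
done.
Qed.

Lemma Hm_row1 (R : pzRingType) (a : nat -> R) s m :
  row' (lift ord0 ord0) (col' ord0 (Hm a s m.+2)) = Hm a s.+1 m.+1.
Proof.
apply/matrixP => i j; rewrite !mxE /=.
rewrite /bump /= !add1n.
case: i => [[|i] Hi] /=.
  by rewrite addSnnS.
by rewrite ltnS subSS !eqSS.
Qed.

Lemma detHm (R : comPzRingType) (a : nat -> R) m : forall s,
  \det (Hm a s m.+1) = \sum_(r < m.+1) (-1)^+r * a (s + r)%N * \det (toeplitz_hess a (m - r)).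
Proof.
elim: m => [|m IH] s.
  rewrite [Hm a s 1]mx11_scalar det_mx11 big_ord1 !mxE /= addn0 expr0 mul1r det_mx00.
  by rewrite mulr1.
rewrite (expand_det_col _ ord0) big_ord_recl big_ord_recl big1; last first.
  move=> i _; rewrite !mxE /= /bump /=; by rewrite mul0r.
rewrite /cofactor Hm_row0 Hm_row1 IH [RHS]big_ord_recl !mxE /= subn0 addn0 expr0 !mul1r addr0.
rewrite /bump /= add1n expr1 mulr_sumr; congr (_ + _).
rewrite mulr_sumr; apply: eq_bigr => i _.
by rewrite exprD expr1 addSnnS subSS; ring.
Qed.

Lemma sgn2 (R : pzRingType) n : (-1)^+n * (-1)^+n = 1 :> R.
Proof. by rewrite -exprD -signr_odd oddD addbb. Qed.

Lemma Drec (R : comPzRingType) (a : nat -> R) m :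
  \det (toeplitz_hess a m.+1) =
  \sum_(r < m.+1) (-1)^+r * a r * \det (toeplitz_hess a (m - r)).
Proof. by rewrite -Hm0 detHm. Qed.

Definition gam {R : pzRingType} (t : R) (s : nat) : R :=
  if s == 0%N then t - 1 else (1 - t)^+2 * t ^+ s.-1.

Lemma sum_gam (R : comPzRingType) (t : R) m :
  \sum_(s < m.+1) gam t s = (t - 1) * t ^+ m.
Proof.
elim: m => [|m IH]; first by rewrite big_ord1 /gam /= expr0 mulr1.
rewrite big_ord_recr /= IH /gam /= (exprS t m); ring.
Qed.

Definition cc {R : pzRingType} (k : nat) (t : R) (r : nat) : R :=
  if (r <= k)%N then (r == 0%N)%:R else gam t (r - k.+1).

Lemma Dval (R : comPzRingType) k (t : R) a : is_Akt_seq k t a ->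
  forall m, \det (toeplitz_hess a m) = t ^+ (m - k.+1).
Proof.
move=> ha [|m]; last by apply: ha.
by rewrite det_mx00 sub0n expr0.
Qed.

Lemma I2 (R : comPzRingType) k (t : R) r : (r <= 2 * k + 1)%N ->
  \sum_(r' < r.+1) cc k t r' * t ^+ (r - r' - k.+1) = t ^+ (r.+1 - k.+1).
Proof.
move=> hr.
case: (leqP r k) => hrk.
  rewrite big_ord_recl /cc /= mul1r big1 ?addr0.
    have -> : (r - 0 - k.+1 = 0)%N by lia.
    have -> : (r.+1 - k.+1 = 0)%N by lia.
    done.
  move=> i _; rewrite /bump /= add1n.
  have -> : (i.+1 <= k)%N by have := ltn_ord i; lia.
  by rewrite mul0r.
rewrite -(big_mkord xpredT (fun r0 => cc k t r0 * t ^+ (r - r0 - k.+1))) (@big_cat_nat _ _ _ k.+1) //=; last by lia.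
rewrite big_nat_recl //= /cc /= mul1r big1_seq ?addr0; last first.
  move=> i /andP[_]; rewrite mem_index_iota => /andP[_ hi].
  have -> : (i.+1 <= k)%N by lia.
  by rewrite mul0r.
have -> : forall F : nat -> R, \sum_(k.+1 <= i < r.+1) F i = \sum_(0 <= i < r.+1 - k.+1) F (i + k.+1)%N.
  by move=> F; rewrite -{1}[k.+1]add0n big_addn.
rewrite (eq_big_nat _ _ (F2 := fun i => gam t i)); last first.
  move=> i /andP[_ hi].
  have -> : (i + k.+1 <= k)%N = false by lia.
  have -> : (i + k.+1 - k.+1 = i)%N by lia.
  have -> : (r - (i + k.+1) - k.+1 = 0)%N by lia.
  by rewrite mulr1.
have -> : (r.+1 - k.+1 = (r - k.+1).+1)%N by lia.
rewrite big_mkord sum_gam subn0 [in RHS]exprS; ring.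
Qed.


Lemma a_val (R : realFieldType) k (t : R) a : is_Akt_seq k t a ->
  forall r, (r <= 2 * k + 1)%N -> a r = (-1)^+r * cc k t r.
Proof.
move=> ha r; elim/ltn_ind: r => r IH hr.
have H := @Drec R a r.
rewrite (Dval _ _ _ _ ha) big_ord_recr /= subnn (Dval _ _ _ _ ha) sub0n expr0 mulr1 in H.
rewrite (eq_bigr (fun i : 'I_r => cc k t i * t^+(r - i - k.+1))) in H; last first.
  move=> i _; rewrite (Dval _ _ _ _ ha) IH //; last by have := ltn_ord i; lia.
  by rewrite mulrA sgn2 mul1r.
have I := I2 _ _ t _ hr.
rewrite big_ord_recr /= subnn sub0n expr0 mulr1 in I.
have E : (-1)^+r * a r = cc k t r by lra.
by rewrite -E mulrA sgn2 mul1r.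
Qed.

Definition Ee (k n i j : nat) : nat :=
  minn (minn i.+1 (n - k.+1)) (minn (n - j) (i.+1 + k.+1 - j)).

Definition Yv {R : fieldType} (t : R) (k n i j : nat) : R :=
  t^-1 ^+ (Ee k n i j) - (i < j)%:R.

Lemma ind_diff (R : comPzRingType) (i j : nat) :
  (i < j.+1)%:R - (i < j)%:R = (i == j)%:R :> R.
Proof.
case: (ltngtP i j) => h.
- have -> : (i < j.+1)%N = true by lia.
  rewrite /=; ring.
- have -> : (i < j.+1)%N = false by lia.
  rewrite /=; ring.
- rewrite h ltnSn /=; ring.
Qed.

Lemma sum_ind (R : pzRingType) (g : nat -> R) m N : (m <= N)%N ->
  \sum_(0 <= l < N) (l < m)%:R * g l = \sum_(0 <= l < m) g l.
Proof.
move=> hm; rewrite (@big_cat_nat _ _ _ m 0 N) /=; [|by []|by []].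
rewrite [X in _ + X]big1_seq ?addr0; last first.
  move=> l /andP[_]; rewrite mem_index_iota => /andP[h _].
  by rewrite ltnNge h mul0r.
apply: eq_big_nat => l /andP[_ h]; by rewrite h mul1r.
Qed.

Lemma uexp (R : fieldType) (t : R) x y : t != 0 ->
  t^-1 ^+ (x + y) * t ^+ y = t^-1 ^+ x.
Proof.
move=> ht; rewrite exprD -mulrA [X in _ * (X * _)]exprVn mulVf ?mulr1 //.
by rewrite expf_neq0.
Qed.

Lemma uexp2 (R : fieldType) (t : R) x y : t != 0 ->
  t^-1 ^+ y * t ^+ (x + y) = t ^+ x.
Proof.
move=> ht; rewrite exprD mulrCA exprVn mulVf ?mulr1 //.
by rewrite expf_neq0.
Qed.

Lemma core (R : fieldType) (t : R) k n i j : t != 0 -> (n <= 2 * k + 2)%N ->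
  (i < n)%N -> (j < n)%N ->
  \sum_(0 <= l < j.+1) Yv t k n i l * cc k t (j - l) - Yv t k n i j.+1 = (i == j)%:R.
Proof.
move=> ht hn hi hj.
rewrite big_nat_recr //= subnn /cc leq0n eqxx mulr1.
case: (ltnP j k.+1) => hjk.
  rewrite big1_seq ?add0r; last first.
    move=> l /andP[_]; rewrite mem_index_iota => /andP[_ hl].
    have -> : (j - l <= k)%N by lia.
    have -> : (j - l == 0)%N = false by apply/negbTE; lia.
    by rewrite mulr0.
  rewrite /Yv.
  have -> : Ee k n i j.+1 = Ee k n i j by rewrite /Ee; lia.
  rewrite -(ind_diff R i j).
  set x := t^-1 ^+ _; set b1 := ((i < j)%:R : R); set b2 := ((i < j.+1)%:R : R).
  ring.
rewrite (@big_cat_nat _ _ _ (j - k.+1).+1 0 j) //=; last by lia.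
rewrite [X in _ + X + _ - _ = _]big1_seq ?addr0; last first.
  move=> l /andP[_]; rewrite mem_index_iota => /andP[h1 h2].
  have -> : (j - l <= k)%N by lia.
  have -> : (j - l == 0)%N = false by apply/negbTE; lia.
  by rewrite mulr0.
rewrite (eq_big_nat _ _ (F2 := fun l => (t^-1 ^+ minn i.+1 (n - k.+1) - (i < l)%:R) * gam t (j - k.+1 - l))); last first.
  move=> l /andP[_ hl]; rewrite /Yv.
  have -> : Ee k n i l = minn i.+1 (n - k.+1) by rewrite /Ee; lia.
  have -> : (j - l <= k)%N = false by lia.
  by have -> : (j - l - k.+1 = j - k.+1 - l)%N by lia.
set J := (j - k.+1)%N.
set U := t^-1 ^+ minn i.+1 (n - k.+1).
under eq_bigr do rewrite mulrBl.
rewrite sumrB -mulr_sumr.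
have S1 : \sum_(0 <= l < J.+1) gam t (J - l) = (t - 1) * t ^+ J.
  rewrite big_nat_rev /= (eq_big_nat _ _ (F2 := gam t)); first by rewrite big_mkord sum_gam.
  move=> l /andP[_ hl]; congr gam; lia.
have S2 : \sum_(0 <= l < J.+1) (i < l)%:R * gam t (J - l) = \sum_(0 <= l < J - i) gam t l.
  rewrite big_nat_rev /= -(sum_ind _ _ (J - i) J.+1); last by lia.
  apply: eq_big_nat => l /andP[_ hl].
  have -> : (J - (0 + J.+1 - l.+1) = l)%N by lia.
  have -> : (i < 0 + J.+1 - l.+1)%N = (l < J - i)%N by lia.
  done.
rewrite S1 S2 /Yv /U.
case: (ltnP i J) => hiJ.
  have -> : (J - i = (J - i.+1).+1)%N by lia.
  rewrite big_mkord sum_gam.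
  have -> : Ee k n i j = 0%N by rewrite /Ee /J; lia.
  have -> : Ee k n i j.+1 = 0%N by rewrite /Ee /J; lia.
  have -> : minn i.+1 (n - k.+1) = i.+1 by rewrite /J; lia.
  have -> : (i == j) = false by apply/negbTE; rewrite /J in hiJ; lia.
  have -> : (i < j)%N = true by rewrite /J in hiJ; lia.
  have -> : (i < j.+1)%N = true by rewrite /J in hiJ; lia.
  rewrite mulrCA.
  have -> : J = (J - i.+1 + i.+1)%N by lia.
  rewrite uexp2 // addnK /=; ring.
rewrite big_geq; last by lia.
set m := minn (i - J) (n - j - 1).
have -> : Ee k n i j = m.+1 by rewrite /Ee /m /J; lia.
have -> : Ee k n i j.+1 = m by rewrite /Ee /m /J; lia.
have -> : minn i.+1 (n - k.+1) = (m.+1 + J)%N by rewrite /m /J; lia.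
rewrite mulrCA uexp // -(ind_diff R i j) exprS.
by field.
Qed.

Definition Xm {R : fieldType} (t : R) (k n : nat) : 'M[R]_n :=
  \matrix_(i < n, j < n) ((-1)^+(i + j)%N * Yv t k n i j).

Lemma XA (R : realFieldType) k (t : R) a : t != 0 -> is_Akt_seq k t a ->
  forall n, (n <= 2 * k + 2)%N -> Xm t k n *m toeplitz_hess a n = 1%:M.
Proof.
move=> ht ha n hn; apply/matrixP => i j; rewrite !mxE.
pose F (l : nat) := (-1)^+(i + l) * Yv t k n i l *
   (if (l <= j)%N then a (j - l)%N else if l == j.+1 then 1 else 0).
rewrite (eq_bigr (fun l : 'I_n => F l)); last by move=> l _; rewrite !mxE.
rewrite -(big_mkord xpredT F).
have hi := ltn_ord i; have hj := ltn_ord j.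
have -> : \sum_(0 <= l < n) F l = \sum_(0 <= l < j.+2) F l.
  case: (ltnP j.+1 n) => h.
    rewrite (@big_cat_nat _ _ _ j.+2 0 n) //= [X in _ + X]big1_seq ?addr0 //.
    move=> l /andP[_]; rewrite mem_index_iota => /andP[h1 _].
    rewrite /F; have -> : (l <= j)%N = false by lia.
    have -> : (l == j.+1) = false by apply/negbTE; lia.
    by rewrite mulr0.
  have -> : j.+2 = n.+1 by lia.
  rewrite big_nat_recr //= /F /Yv.
  have -> : Ee k n i n = 0%N by rewrite /Ee; lia.
  by rewrite hi subrr mulr0 mul0r addr0.
rewrite big_nat_recr //= [F j.+1]/F ltnn eqxx mulr1.
rewrite (eq_big_nat _ _ (F2 := fun l => (-1)^+(i + j) * (Yv t k n i l * cc k t (j - l)))); last first.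
  move=> l /andP[_ hl]; rewrite ltnS in hl; rewrite /F hl (a_val _ _ _ _ ha); last by lia.
  have -> : (-1) ^+ (i + j) = (-1) ^+ (i + l) * (-1) ^+ (j - l) :> R.
    by rewrite -exprD -addnA subnKC.
  ring.
rewrite -mulr_sumr.
have -> : (-1) ^+ (i + j.+1) = - (-1) ^+ (i + j) :> R by rewrite addnS exprS mulN1r.
rewrite mulNr -mulrBr core //.
case: (eqVneq i j) => [->|hij].
  by rewrite !eqxx -signr_odd addnn odd_double expr0 mulr1.
have h1 : (nat_of_ord i == nat_of_ord j) = false by apply/negbTE.
by rewrite h1 mulr0.
Qed.

Theorem proposition4 (R : realFieldType) (k : nat) (t : R)
    (ht0 : 0 < t) (ht1 : t < 1) (a : nat -> R) (ha : is_Akt_seq k t a)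
    (n : nat) (hn : (n <= 2 * k + 2)%N) :
  forall i j : 'I_n,
    invmx (toeplitz_hess a n) i j = 0 \/
    0 < (-1) ^+ (i + j)%N * invmx (toeplitz_hess a n) i j.
Proof.
have ht : t != 0 by rewrite gt_eqF.
have hX := XA _ _ _ _ ht ha _ hn.
have [_ uA] := mulmx1_unit hX.
have hinv : invmx (toeplitz_hess a n) = Xm t k n.
  by rewrite -[Xm t k n]mulmx1 -(mulmxV uA) mulmxA hX mul1mx.
move=> i j; rewrite hinv !mxE mulrA sgn2 mul1r.
have hu : 1 <= t^-1 by rewrite invf_ge1 // ltW.
have hY : 0 <= Yv t k n i j.
  rewrite /Yv; have h1 := exprn_ege1 (Ee k n i j) hu.
  case: (i < j)%N; rewrite /= ?subr0 ?subr_ge0 //.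
  exact: le_trans ler01 h1.
case: (eqVneq (Yv t k n i j) 0) => [->|hne].
  by left; rewrite mulr0.
by right; rewrite lt_def hne hY.
Qed.
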